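(* For every integer $t$, \begin{align*} \sum_{n=1}^\infty\binom{2n}{n}\frac{O_nL_{2n+t}}{12^n}&=\frac{\sqrt3}{2}\bigl(2L_{t+1}\ln\alpha+\sqrt5\,F_{t+1}\ln3\bigr),\\ \sum_{n=1}^\infty\binom{2n}{n}\frac{O_nF_{2n+t}}{12^n}&=\frac{\sqrt{15}}{10}\bigl(2\sqrt5\,F_{t+1}\ln\alpha+L_{t+1}\ln3\bigr), \end{align*} and, for every gibonacci sequence $G_j=G_j(a,b)$, \[ \sum_{n=1}^\infty\binom{2n}{n}\frac{O_nG_{2n+t}}{12^n}=\frac{\sqrt{15}}{10}\bigl(2\sqrt5\,G_{t+1}\ln\alpha+(G_{t+2}+G_t)\ln3\bigr). \]
   Context: $O_n=\sum_{j=1}^n\frac1{2j-1}$. $F_n$ and $L_n$ are the Fibonacci and Lucas numbers ($F_0=0,F_1=1$, $L_0=2,L_1=1$, $u_n=u_{n-1}+u_{n-2}$), extended to all integers by the recurrence. $\alpha=(1+\sqrt5)/2$, $\beta=-1/\alpha$. For numbers $a,b$ not both zero, the gibonacci sequence $G_j=G_j(a,b)$ is defined by $G_0=a$, $G_1=b$, $G_j=G_{j-1}+G_{j-2}$, extended to negative indices by $G_{-j}=G_{-(j-2)}-G_{-(j-1)}$; equivalently $G_j=\frac{(b-a\beta)\alpha^j+(a\alpha-b)\beta^j}{\alpha-\beta}$. *)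

(* Defs.v *)
From Stdlib Require Import Reals ZArith.
From Coquelicot Require Import Coquelicot.
Open Scope R_scope.

Fixpoint Odd_harm (n : nat) : R :=
  match n with
  | O => 0
  | S m => Odd_harm m + / (2 * INR (S m) - 1)
  end.

Fixpoint gib_pos (a b : R) (n : nat) : R :=
  match n with
  | O => a
  | S O => b
  | S ((S m) as k) => gib_pos a b k + gib_pos a b m
  end.

(* gib_neg a b n = G_{-n}: G_0 = a, G_{-1} = G_1 - G_0,
   G_{-(n+2)} = G_{-n} - G_{-(n+1)} *)
Fixpoint gib_neg (a b : R) (n : nat) : R :=
  match n with
  | O => a
  | S O => b - a
  | S ((S m) as k) => gib_neg a b m - gib_neg a b k
  end.

Definition gib (a b : R) (j : Z) : R :=
  if (0 <=? j)%Z then gib_pos a b (Z.to_nat j) else gib_neg a b (Z.to_nat (- j)).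

Definition Fib (j : Z) : R := gib 0 1 j.
Definition Luc (j : Z) : R := gib 2 1 j.

Definition alpha : R := (1 + sqrt 5) / 2.

Definition term (X : Z -> R) (t : Z) (n : nat) : R :=
  Binomial.C (2 * n)%nat n * Odd_harm n * X (2 * Z.of_nat n + t)%Z / 12 ^ n.

(* Main.v *)
Require Import Defs.
From Stdlib Require Import Reals ZArith Lra Lia.
From Coquelicot Require Import Coquelicot.
Open Scope R_scope.

Definition cc (n : nat) : R := Binomial.C (2 * n) n.
Definition aa (n : nat) : R := cc n * Odd_harm n.

Lemma fact_pos' n : 0 < INR (fact n).
Proof. apply lt_0_INR, lt_O_fact. Qed.

Lemma cc_rec n : cc (S n) = cc n * (2 * (2 * INR n + 1) / (INR n + 1)).
Proof.
  unfold cc, Binomial.C.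
  replace (2 * S n - S n)%nat with (S n) by lia.
  replace (2 * n - n)%nat with n by lia.
  replace (2 * S n)%nat with (S (S (2 * n))) by lia.
  rewrite !fact_simpl, !mult_INR, !S_INR, mult_INR.
  simpl (INR 2).
  pose proof (fact_pos' n); pose proof (fact_pos' (2*n)).
  pose proof (pos_INR n).
  field; lra.
Qed.

Lemma cc0 : cc 0 = 1.
Proof. unfold cc, Binomial.C; simpl; field. Qed.

Lemma cc_pos n : 0 < cc n.
Proof.
  induction n. rewrite cc0; lra.
  rewrite cc_rec. pose proof (pos_INR n).
  apply Rmult_lt_0_compat; auto. apply Rdiv_lt_0_compat; lra.
Qed.

Lemma Oh_S n : Odd_harm (S n) = Odd_harm n + / (2 * INR n + 1).
Proof. change (Odd_harm (S n)) with (Odd_harm n + / (2 * INR (S n) - 1)). rewrite S_INR. f_equal. f_equal. ring. Qed.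

Lemma aa_rec n : INR (S n) * aa (S n) = 2 * (2 * INR n + 1) * aa n + 2 * cc n.
Proof.
  unfold aa. rewrite cc_rec, Oh_S, S_INR. pose proof (pos_INR n).
  field; lra.
Qed.

Lemma cc_rec' n : INR (S n) * cc (S n) = 2 * (2 * INR n + 1) * cc n.
Proof. rewrite cc_rec, S_INR. pose proof (pos_INR n). field; lra. Qed.

Lemma Oh_bound n : 0 <= Odd_harm n <= INR n.
Proof.
  induction n. simpl; lra.
  rewrite Oh_S, S_INR. pose proof (pos_INR n).
  assert (0 < / (2 * INR n + 1) <= 1).
  { split. apply Rinv_0_lt_compat; lra.
    rewrite <- Rinv_1. apply Rinv_le_contravar; lra. }
  lra.
Qed.

Lemma radius_dom (a b : nat -> R) :
  (forall n, Rabs (a n) <= Rabs (b n)) -> Rbar_le (CV_radius b) (CV_radius a).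
Proof.
  intros H.
  destruct (CV_radius_bounded a) as [Ua La].
  destruct (CV_radius_bounded b) as [Ub Lb].
  apply Lb. intros r [M HM]. apply Ua. exists M. intros n.
  eapply Rle_trans; [| apply (HM n)].
  rewrite !Rabs_mult. apply Rmult_le_compat_r. apply Rabs_pos. apply H.
Qed.

Lemma radius_cc : CV_radius cc = / 4.
Proof.
  apply CV_radius_finite_DAlembert.
  - intros n; pose proof (cc_pos n); lra.
  - lra.
  - apply is_lim_seq_ext with (fun n => 4 - 2 * / INR (S n)).
    { intros n. rewrite cc_rec. pose proof (cc_pos n). pose proof (pos_INR n).
      rewrite S_INR. rewrite Rabs_pos_eq.
      field. split; lra.
      apply Rmult_le_pos. apply Rmult_le_pos; try lra.
      apply Rmult_le_pos; [lra|]. left. apply Rinv_0_lt_compat. lra.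
      left. apply Rinv_0_lt_compat; auto. }
    assert (H0 : is_lim_seq (fun n => / INR (S n)) 0).
    { apply (is_lim_seq_incr_1 (fun n => / INR n)).
      replace (Finite 0) with (Rbar_inv p_infty) by reflexivity.
      apply is_lim_seq_inv. apply is_lim_seq_INR. discriminate. }
    assert (H1 := is_lim_seq_scal_l _ 2 _ H0). simpl in H1. rewrite Rmult_0_r in H1.
    assert (H2 := is_lim_seq_minus' _ _ 4 0 (is_lim_seq_const 4) H1).
    replace (4 - 0) with 4 in H2 by ring. exact H2.
Qed.

Lemma radius_aa : Rbar_le (/ 4) (CV_radius aa).
Proof.
  rewrite <- radius_cc, <- (CV_radius_derive cc).
  apply radius_dom. intros n. unfold PS_derive.
  rewrite cc_rec'. unfold aa. pose proof (cc_pos n). pose proof (pos_INR n).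
  pose proof (Oh_bound n).
  rewrite !Rabs_pos_eq.
  - rewrite Rmult_comm. apply Rmult_le_compat_r; lra.
  - apply Rmult_le_pos; lra.
  - apply Rmult_le_pos; lra.
Qed.

Lemma incr_derive (b : nat -> R) n : PS_incr_1 (PS_derive b) n = INR n * b n.
Proof. destruct n; simpl PS_incr_1. change (@zero R_NormedModule) with 0. simpl; ring. unfold PS_derive. reflexivity. Qed.

Lemma ode_gen (b d : nat -> R) x :
  Rbar_lt (Rabs x) (CV_radius b) -> Rbar_lt (Rabs x) (CV_radius d) ->
  (forall n, INR (S n) * b (S n) = (4 * INR n + 2) * b n + 2 * d n) ->
  (1 - 4 * x) * PSeries (PS_derive b) x = 2 * PSeries b x + 2 * PSeries d x.
Proof.
  intros Hb Hd Hrec.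
  set (D := PSeries (PS_derive b) x).
  assert (HD : is_pseries (PS_derive b) x D) by
    (apply PSeries_correct, ex_pseries_derive, Hb).
  assert (HB : is_pseries b x (PSeries b x)) by
    (apply PSeries_correct, CV_radius_inside, Hb).
  assert (HDd : is_pseries d x (PSeries d x)) by
    (apply PSeries_correct, CV_radius_inside, Hd).
  assert (H1 := is_pseries_incr_1 _ _ _ HD).
  assert (H2 := is_pseries_scal 4 _ _ _ (Rmult_comm _ _) H1).
  assert (H3 := is_pseries_scal 2 _ _ _ (Rmult_comm _ _) HB).
  assert (H4 := is_pseries_scal 2 _ _ _ (Rmult_comm _ _) HDd).
  assert (H5 := is_pseries_plus _ _ _ _ _ H2 (is_pseries_plus _ _ _ _ _ H3 H4)).
  assert (H6 : is_pseries (PS_derive b) x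
     (plus (scal 4 (scal x D)) (plus (scal 2 (PSeries b x)) (scal 2 (PSeries d x))))).
  { eapply is_pseries_ext; [| exact H5]. intros n.
    unfold PS_plus, PS_scal. rewrite incr_derive. unfold PS_derive.
    rewrite Hrec. unfold plus, scal; simpl. unfold mult; simpl. ring. }
  apply is_pseries_unique in H6. apply is_pseries_unique in HD.
  rewrite HD in H6. unfold plus, scal in H6; simpl in H6. unfold mult in H6; simpl in H6.
  unfold D in *. lra.
Qed.

Lemma const_of_deriv0 (f : R -> R) x : 0 <= x ->
  (forall y, 0 <= y <= x -> is_derive f y 0) -> f x = f 0.
Proof.
  intros Hx Hd.
  destruct (MVT_gen f 0 x (fun _ => 0)) as [c [_ Hc]].
  - intros y. rewrite Rmin_left, Rmax_right by lra. intros Hy. apply Hd; lra.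
  - intros y. rewrite Rmin_left, Rmax_right by lra. intros Hy.
    apply derivable_continuous_pt. exists 0.
    apply is_derive_Reals. apply Hd; lra.
  - lra.
Qed.

Lemma rad_cc_lt y : 0 <= y < / 4 -> Rbar_lt (Rabs y) (CV_radius cc).
Proof. intros Hy. rewrite radius_cc, Rabs_pos_eq by lra. simpl. lra. Qed.

Lemma rad_aa_lt y : 0 <= y < / 4 -> Rbar_lt (Rabs y) (CV_radius aa).
Proof.
  intros Hy. eapply Rbar_lt_le_trans; [| apply radius_aa].
  rewrite Rabs_pos_eq by lra. simpl. lra.
Qed.

Lemma ode_cc y : 0 <= y < / 4 ->
  (1 - 4 * y) * PSeries (PS_derive cc) y = 2 * PSeries cc y.
Proof.
  intros Hy. rewrite (ode_gen cc (fun _ => 0)).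
  - rewrite PSeries_const_0. ring.
  - apply rad_cc_lt; auto.
  - rewrite CV_radius_const_0. simpl; auto.
  - intros n. rewrite cc_rec'. ring.
Qed.

Lemma ode_aa y : 0 <= y < / 4 ->
  (1 - 4 * y) * PSeries (PS_derive aa) y = 2 * PSeries aa y + 2 * PSeries cc y.
Proof.
  intros Hy. apply ode_gen.
  - apply rad_aa_lt; auto.
  - apply rad_cc_lt; auto.
  - intros n. rewrite aa_rec. ring.
Qed.

Lemma F_closed x : 0 <= x < / 4 -> PSeries cc x * sqrt (1 - 4 * x) = 1.
Proof.
  intros Hx.
  rewrite (const_of_deriv0 (fun y => PSeries cc y * sqrt (1 - 4 * y)) x).
  - rewrite PSeries_0, cc0. replace (1 - 4 * 0) with 1 by ring. rewrite sqrt_1. ring.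
  - lra.
  - intros y Hy. auto_derive.
    + split. apply ex_derive_PSeries, rad_cc_lt; lra. split; auto. lra.
    + rewrite Derive_PSeries by (apply rad_cc_lt; lra).
      pose proof (ode_cc y ltac:(lra)).
      assert (Hs : 0 < sqrt (1 - 4 * y)) by (apply sqrt_lt_R0; lra).
      assert (Hss := sqrt_sqrt (1 - 4*y) ltac:(lra)).
      field_simplify; replace (1 + - (4 * y)) with (1 - 4 * y) by ring; try lra.
      replace (2 * PSeries (PS_derive cc) y * sqrt (1 - 4 * y) ^ 2 - 4 * PSeries cc y)
        with (2 * ((1 - 4 * y) * PSeries (PS_derive cc) y) - 4 * PSeries cc y)
        by (rewrite pow2_sqrt by lra; ring).
      rewrite H. field. lra.
Qed.

Lemma S_closed x : 0 <= x < / 4 -> PSeries aa x * sqrt (1 - 4 * x) + ln (1 - 4 * x) / 2 = 0.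
Proof.
  intros Hx.
  rewrite (const_of_deriv0 (fun y => PSeries aa y * sqrt (1 - 4 * y) + ln (1 - 4 * y) / 2) x).
  - rewrite PSeries_0. unfold aa. simpl Odd_harm. replace (1 - 4 * 0) with 1 by ring.
    rewrite ln_1. unfold Rdiv; rewrite !Rmult_0_r, !Rmult_0_l; apply Rplus_0_r.
  - lra.
  - intros y Hy. auto_derive.
    + split. apply ex_derive_PSeries, rad_aa_lt; lra. split; lra.
    + rewrite Derive_PSeries by (apply rad_aa_lt; lra).
      pose proof (ode_aa y ltac:(lra)).
      pose proof (F_closed y ltac:(lra)).
      assert (Hs : 0 < sqrt (1 - 4 * y)) by (apply sqrt_lt_R0; lra).
      assert (Hss := sqrt_sqrt (1 - 4*y) ltac:(lra)).
      replace (1 + - (4 * y)) with (1 - 4 * y) by ring.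
      set (s := sqrt (1 - 4 * y)) in *. rewrite <- Hss in H |- *.
      set (D := PSeries (PS_derive aa) y) in *.
      set (S := PSeries aa y) in *. set (F := PSeries cc y) in *.
      transitivity ((((s * s) * D) * s - 2 * S * s - 2) / (s * s)).
      { field. lra. }
      rewrite H. replace ((2 * S + 2 * F) * s - 2 * S * s - 2) with (2 * (F * s) - 2) by ring.
      rewrite H0. field. lra.
Qed.

Lemma gen_series x : 0 <= x < / 4 ->
  is_series (fun n => aa n * x ^ n) (- ln (1 - 4 * x) / (2 * sqrt (1 - 4 * x))).
Proof.
  intros Hx. apply is_pseries_R.
  replace (- ln (1 - 4 * x) / (2 * sqrt (1 - 4 * x))) with (PSeries aa x).
  apply PSeries_correct, CV_radius_inside, rad_aa_lt; auto.
  pose proof (S_closed x Hx).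
  assert (Hs : 0 < sqrt (1 - 4 * x)) by (apply sqrt_lt_R0; lra).
  field_simplify_eq; [| lra]. lra.
Qed.

Definition beta : R := (1 - sqrt 5) / 2.

Lemma s5_sq : sqrt 5 * sqrt 5 = 5.
Proof. apply sqrt_sqrt; lra. Qed.
Lemma s5_pos : 0 < sqrt 5.
Proof. apply sqrt_lt_R0; lra. Qed.

Lemma alpha_sq : alpha * alpha = alpha + 1.
Proof. unfold alpha. pose proof s5_sq. nra. Qed.
Lemma beta_sq : beta * beta = beta + 1.
Proof. unfold beta. pose proof s5_sq. nra. Qed.
Lemma alpha_beta : alpha * beta = -1.
Proof. unfold alpha, beta. pose proof s5_sq. nra. Qed.
Lemma alpha_pos : 1 < alpha.
Proof. unfold alpha. pose proof s5_pos. assert (1 < sqrt 5). 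
  { rewrite <- sqrt_1. apply sqrt_lt_1; lra. } lra. Qed.

Section Binet.
Variables a b : R.
Let P := (b - a * beta) / sqrt 5.
Let Q := (a * alpha - b) / sqrt 5.

Lemma binet_pos n : gib_pos a b n = P * alpha ^ n + Q * beta ^ n.
Proof.
  assert (H : forall n, gib_pos a b n = P * alpha ^ n + Q * beta ^ n /\
                        gib_pos a b (S n) = P * alpha ^ (S n) + Q * beta ^ (S n)).
  { induction n0.
    - split; simpl; unfold P, Q; pose proof s5_pos; unfold alpha, beta;
      field_simplify_eq; try lra. 
    - destruct IHn0 as [H1 H2]. split; auto.
      change (gib_pos a b (S (S n0))) with (gib_pos a b (S n0) + gib_pos a b n0).
      rewrite H1, H2. simpl. pose proof alpha_sq. pose proof beta_sq.
      replace (alpha * (alpha * alpha ^ n0)) with ((alpha * alpha) * alpha ^ n0) by ring.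
      replace (beta * (beta * beta ^ n0)) with ((beta * beta) * beta ^ n0) by ring.
      rewrite H, H0. ring. }
  apply H.
Qed.

Lemma binet_neg n : gib_neg a b n = P * (- beta) ^ n + Q * (- alpha) ^ n.
Proof.
  assert (H : forall n, gib_neg a b n = P * (- beta) ^ n + Q * (- alpha) ^ n /\
                        gib_neg a b (S n) = P * (- beta) ^ (S n) + Q * (- alpha) ^ (S n)).
  { induction n0.
    - split; simpl; unfold P, Q; pose proof s5_pos; unfold alpha, beta;
      field_simplify_eq; try lra. 
    - destruct IHn0 as [H1 H2]. split; auto.
      change (gib_neg a b (S (S n0))) with (gib_neg a b n0 - gib_neg a b (S n0)).
      rewrite H1, H2. simpl. pose proof alpha_sq. pose proof beta_sq.
      replace (- alpha * (- alpha * (- alpha) ^ n0)) with ((alpha * alpha) * (- alpha) ^ n0) by ring.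
      replace (- beta * (- beta * (- beta) ^ n0)) with ((beta * beta) * (-beta) ^ n0) by ring.
      rewrite H, H0. ring. }
  apply H.
Qed.

Lemma binet j : gib a b j = P * powerRZ alpha j + Q * powerRZ beta j.
Proof.
  unfold gib. destruct (Z.leb_spec 0 j).
  - rewrite binet_pos. rewrite !pow_powerRZ. rewrite Z2Nat.id by lia. reflexivity.
  - rewrite binet_neg.
    remember (Z.to_nat (- j)) as k.
    assert (Hj : j = (- Z.of_nat k)%Z) by lia. rewrite Hj.
    rewrite !powerRZ_neg', <- !pow_powerRZ.
    pose proof alpha_beta. pose proof alpha_pos.
    assert (alpha <> 0) by lra. assert (beta <> 0) by (intro E; rewrite E in H0; lra).
    rewrite <- !pow_inv.
    replace (/ alpha) with (- beta) by (field_simplify_eq; lra).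
    replace (/ beta) with (- alpha) by (field_simplify_eq; lra).
    reflexivity.
Qed.
End Binet.

Lemma s3_pos : 0 < sqrt 3.
Proof. apply sqrt_lt_R0; lra. Qed.

Lemma SA_val : - ln (1 - 4 * (alpha * alpha / 12)) / (2 * sqrt (1 - 4 * (alpha * alpha / 12)))
  = (ln 3 + 2 * ln alpha) * sqrt 3 * alpha / 2.
Proof.
  pose proof alpha_sq. pose proof alpha_pos. pose proof s3_pos.
  replace (1 - 4 * (alpha * alpha / 12)) with (/ (3 * (alpha * alpha))).
  2:{ assert (alpha * alpha * (alpha * alpha) = 3 * alpha + 2) by nra.
      field_simplify_eq; nra. }
  rewrite sqrt_inv, ln_Rinv by nra.
  rewrite sqrt_mult, sqrt_square, ln_mult, ln_mult by nra.
  field. lra.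
Qed.

Lemma SB_val : - ln (1 - 4 * (beta * beta / 12)) / (2 * sqrt (1 - 4 * (beta * beta / 12)))
  = (ln 3 - 2 * ln alpha) * sqrt 3 / (2 * alpha).
Proof.
  pose proof alpha_sq. pose proof alpha_pos. pose proof s3_pos. pose proof beta_sq.
  pose proof alpha_beta.
  replace (1 - 4 * (beta * beta / 12)) with ((alpha * alpha) * / 3).
  2:{ unfold alpha, beta in *. pose proof s5_sq. field_simplify_eq. nra. }
  rewrite sqrt_mult, sqrt_square, ln_mult, ln_mult, sqrt_inv, ln_Rinv by nra.
  pose proof (sqrt_sqrt 3 ltac:(lra)).
  field. lra.
Qed.

Lemma pz x n t : x <> 0 -> powerRZ x (2 * Z.of_nat n + t) = (x * x) ^ n * powerRZ x t.
Proof.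
  intros Hx. rewrite powerRZ_add by auto.
  replace (2 * Z.of_nat n)%Z with (Z.of_nat (2 * n)) by lia.
  rewrite <- pow_powerRZ, pow_mult. simpl (x ^ 2). rewrite Rmult_1_r. reflexivity.
Qed.

Lemma beta_nz : beta <> 0.
Proof. intro E. pose proof alpha_beta. rewrite E in H. lra. Qed.

Lemma term_split a b t n :
  term (gib a b) t n =
  (b - a * beta) / sqrt 5 * powerRZ alpha t * (aa n * (alpha * alpha / 12) ^ n) +
  (a * alpha - b) / sqrt 5 * powerRZ beta t * (aa n * (beta * beta / 12) ^ n).
Proof.
  unfold term. rewrite binet. pose proof alpha_pos. pose proof beta_nz.
  rewrite !pz by lra.
  unfold Rdiv at 5 6 7. rewrite !Rpow_mult_distr, !pow_inv. unfold aa.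
  assert (12 ^ n <> 0) by (apply pow_nonzero; lra).
  unfold cc. field. split; auto. pose proof s5_pos; lra.
Qed.

Lemma Oh0 : Odd_harm 0 = 0.
Proof. reflexivity. Qed.

Lemma a1_s5 : alpha * alpha + 1 = sqrt 5 * alpha.
Proof. unfold alpha. pose proof s5_sq. nra. Qed.
Lemma b1_s5 : beta * beta + 1 = - sqrt 5 * beta.
Proof. unfold beta. pose proof s5_sq. nra. Qed.

Lemma main_gib a b t :
  is_series (fun k => term (gib a b) t (S k))
    (sqrt 15 / 10 * (2 * sqrt 5 * gib a b (t + 1)%Z * ln alpha
                     + (gib a b (t + 2)%Z + gib a b t) * ln 3)).
Proof.
  pose proof alpha_pos as Ha. pose proof beta_nz as Hb. pose proof s5_sq. pose proof s5_pos.
  pose proof alpha_sq. pose proof beta_sq. pose proof alpha_beta.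
  assert (Hs3 : sqrt 5 < 3) by nra.
  set (A := (b - a * beta) / sqrt 5 * powerRZ alpha t).
  set (B := (a * alpha - b) / sqrt 5 * powerRZ beta t).
  assert (HA := gen_series (alpha * alpha / 12) ltac:(unfold alpha in *; split; nra)).
  assert (HB := gen_series (beta * beta / 12) ltac:(unfold beta in *; split; nra)).
  rewrite SA_val in HA. rewrite SB_val in HB.
  assert (HS := is_series_plus _ _ _ _ (is_series_scal_l A _ _ HA) (is_series_scal_l B _ _ HB)).
  assert (Ht0 : term (gib a b) t 0 = 0) by (unfold term; rewrite Oh0; unfold Rdiv; rewrite !Rmult_0_r, !Rmult_0_l; reflexivity).
  assert (G1 : gib a b (t + 1) = A * alpha + B * beta).
  { rewrite binet, !powerRZ_add by lra. unfold A, B. simpl. ring. }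
  assert (G2 : gib a b (t + 2) = A * (alpha * alpha) + B * (beta * beta)).
  { rewrite binet, !powerRZ_add by lra. unfold A, B. simpl. ring. }
  assert (G0 : gib a b t = A + B) by (rewrite binet; reflexivity).
  assert (Hia : / alpha = - beta).
  { apply Rmult_eq_reg_l with alpha; [rewrite Rinv_r by lra; lra | lra]. }
  assert (Hs15 : sqrt 15 = sqrt 3 * sqrt 5).
  { rewrite <- sqrt_mult by lra. f_equal. ring. }
  set (VAL := sqrt 15 / 10 * (2 * sqrt 5 * gib a b (t + 1)%Z * ln alpha
                     + (gib a b (t + 2)%Z + gib a b t) * ln 3)).
  assert (HS' : is_series (fun n => A * (aa n * (alpha * alpha / 12) ^ n) + B * (aa n * (beta * beta / 12) ^ n))
     (A * ((ln 3 + 2 * ln alpha) * sqrt 3 * alpha / 2) + B * ((ln 3 - 2 * ln alpha) * sqrt 3 / (2 * alpha)))) by exact HS.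
  assert (HV : A * ((ln 3 + 2 * ln alpha) * sqrt 3 * alpha / 2) + B * ((ln 3 - 2 * ln alpha) * sqrt 3 / (2 * alpha))
               = VAL + term (gib a b) t 0).
  2:{ rewrite HV in HS'. clear HS. rename HS' into HS. apply (is_series_incr_1 (fun n => term (gib a b) t n)).
      eapply is_series_ext; [| exact HS]. intros n. simpl.
      rewrite term_split. fold A B. reflexivity. }
  rewrite Ht0. unfold VAL.
  { rewrite G1, G2, G0, Hs15.
    replace (A * (alpha * alpha) + B * (beta * beta) + (A + B))
      with (A * (alpha * alpha + 1) + B * (beta * beta + 1)) by ring.
    rewrite a1_s5, b1_s5.
    unfold Rdiv. rewrite Rinv_mult, Hia.
    transitivity (sqrt 3 * (sqrt 5 * sqrt 5) / 10 *
       (2 * (A * alpha + B * beta) * ln alpha + (A * alpha - B * beta) * ln 3) + 0).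
    + rewrite s5_sq. field.
    + unfold Rdiv. ring. }
Qed.

Lemma fib_luc t : Fib (t + 2) + Fib t = Luc (t + 1).
Proof.
  unfold Fib, Luc. rewrite !binet, !powerRZ_add by (pose proof alpha_pos; pose proof beta_nz; lra).
  pose proof s5_pos. pose proof a1_s5. pose proof b1_s5. simpl.
  set (x := powerRZ alpha t). set (y := powerRZ beta t).
  replace (2 * beta) with (1 - sqrt 5) by (unfold beta; field).
  replace (2 * alpha) with (1 + sqrt 5) by (unfold alpha; field).
  rewrite !Rmult_1_r.
  transitivity ((x * (alpha * alpha + 1) - y * (beta * beta + 1)) / sqrt 5).
  { field. lra. }
  rewrite H0, H1. field. lra.
Qed.

Lemma luc_fib t : Luc (t + 2) + Luc t = 5 * Fib (t + 1).
Proof.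
  unfold Fib, Luc. rewrite !binet, !powerRZ_add by (pose proof alpha_pos; pose proof beta_nz; lra).
  pose proof s5_pos. pose proof a1_s5. pose proof b1_s5. pose proof s5_sq. simpl.
  set (x := powerRZ alpha t). set (y := powerRZ beta t).
  replace (2 * beta) with (1 - sqrt 5) by (unfold beta; field).
  replace (2 * alpha) with (1 + sqrt 5) by (unfold alpha; field).
  rewrite !Rmult_1_r.
  transitivity (x * (alpha * alpha + 1) + y * (beta * beta + 1)).
  { field. lra. }
  rewrite H0, H1. set (s := sqrt 5) in *. clearbody s. rewrite <- H2. field. lra.
Qed.

Theorem theorem17 :
  forall t : Z,
    is_series (fun k : nat => term Luc t (S k))
      (sqrt 3 / 2 * (2 * Luc (t + 1)%Z * ln alpha + sqrt 5 * Fib (t + 1)%Z * ln 3))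
    /\ is_series (fun k : nat => term Fib t (S k))
      (sqrt 15 / 10 * (2 * sqrt 5 * Fib (t + 1)%Z * ln alpha + Luc (t + 1)%Z * ln 3))
    /\ (forall a b : R, ~ (a = 0 /\ b = 0) ->
         is_series (fun k : nat => term (gib a b) t (S k))
           (sqrt 15 / 10 * (2 * sqrt 5 * gib a b (t + 1)%Z * ln alpha
                            + (gib a b (t + 2)%Z + gib a b t) * ln 3))).
Proof.
  intros t. split; [| split].
  - assert (H := main_gib 2 1 t). fold (Luc (t + 1)) (Luc (t + 2)) (Luc t) in H.
    rewrite luc_fib in H.
    assert (Hs15 : sqrt 15 = sqrt 3 * sqrt 5).
    { rewrite <- sqrt_mult by lra. f_equal. ring. }
    pose proof s5_sq.
    assert (E : sqrt 3 / 2 * (2 * Luc (t + 1)%Z * ln alpha + sqrt 5 * Fib (t + 1)%Z * ln 3)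
      = sqrt 15 / 10 * (2 * sqrt 5 * Luc (t + 1)%Z * ln alpha + 5 * Fib (t + 1)%Z * ln 3)).
    { rewrite Hs15. set (s := sqrt 5) in *. clearbody s. rewrite <- H0.
      transitivity (sqrt 3 * (s * s) / 10 * (2 * Luc (t + 1)%Z * ln alpha + s * Fib (t + 1)%Z * ln 3)).
      rewrite H0. field. field. }
    rewrite E. exact H.
  - assert (H := main_gib 0 1 t). fold (Fib (t + 1)) (Fib (t + 2)) (Fib t) in H.
    rewrite fib_luc in H. exact H.
  - intros a b _. apply main_gib.
Qed.
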